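(* Let $\boldsymbol{\lambda}=(\lambda_1,\dots,\lambda_n)$ be a vector of positive integers and let $(a_1,\dots,a_n,d)$ be a minimal generator of $M(\boldsymbol{\lambda})$ of type (3) or (4). Then $0\le a_i<\lambda_i$ for all $i=1,\dots,n$.
   Context: $M(\boldsymbol{\lambda})=\{(a_1,\dots,a_n,d)\in\mathbb{N}^{n+1}\mid a_1/\lambda_1+\cdots+a_n/\lambda_n\ge d\}$. A minimal generator of $M(\boldsymbol{\lambda})$ is a nonzero element that cannot be written as the sum of two nonzero elements of $M(\boldsymbol{\lambda})$. A minimal generator $(a_1,\dots,a_n,d)$ is of type (3) if $a_n=0$, $d>0$ and $a_ia_j>0$ for some $1\le i<j<n$; it is of type (4) if $d>0$ and $a_ia_n>0$ for some $1\le i<n$. *)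

(* Defs.v *)
From mathcomp Require Import all_boot all_order all_algebra.
Set Implicit Arguments. Unset Strict Implicit. Unset Printing Implicit Defensive.
Import Order.TTheory GRing.Theory Num.Theory.

(* Elements of N^{n+1} are pairs (a, d) with a : {ffun 'I_n -> nat} (indices
   1..n of the paper are 0..n-1 here, so a_n is a at index n-1) and d : nat. *)
Definition elt (n : nat) := ({ffun 'I_n -> nat} * nat)%type.

Definition inM (n : nat) (lam : 'I_n -> nat) (x : elt n) : Prop :=
  ((x.2)%:R <= \sum_(i < n) ((x.1 i)%:R / (lam i)%:R) :> rat)%R.

Definition elt_zero (n : nat) (x : elt n) : Prop :=
  (forall i, x.1 i = 0%N) /\ x.2 = 0%N.

Definition elt_add (n : nat) (x y : elt n) : elt n :=
  ([ffun i => (x.1 i + y.1 i)%N], (x.2 + y.2)%N).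

Definition minimal_generator (n : nat) (lam : 'I_n -> nat) (x : elt n) : Prop :=
  inM lam x /\ ~ elt_zero x /\
  ~ (exists y z : elt n, inM lam y /\ inM lam z /\ ~ elt_zero y /\ ~ elt_zero z
       /\ x = elt_add y z).

Definition is_last (n : nat) (j : 'I_n) : Prop := nat_of_ord j = n.-1.

Definition type3 (n : nat) (x : elt n) : Prop :=
  (forall j : 'I_n, is_last j -> x.1 j = 0%N) /\ (0 < x.2)%N /\
  exists i j : 'I_n, (i < j)%N /\ (j < n.-1)%N /\ (0 < x.1 i * x.1 j)%N.

Definition type4 (n : nat) (x : elt n) : Prop :=
  (0 < x.2)%N /\
  exists i j : 'I_n, is_last j /\ (i < j)%N /\ (0 < x.1 i * x.1 j)%N.

(* Main.v *)
Require Import Defs.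
From mathcomp Require Import all_boot all_order all_algebra.
From mathcomp Require Import zify.
From Stdlib Require Import Lia.
Import Order.TTheory GRing.Theory Num.Theory.

Lemma core (n : nat) (lam : 'I_n -> nat) (a : {ffun 'I_n -> nat}) (d : nat) (k q : 'I_n) :
  (forall i, 0 < lam i)%N -> (0 < d)%N -> q != k -> (0 < a q)%N ->
  minimal_generator lam (a, d) -> (a k < lam k)%N.
Proof.
move=> lam0 d0 qk aq [inx [_ nodec]].
rewrite ltnNge; apply/negP => le.
apply: nodec.
pose y : elt n := ([ffun j => if j == k then lam k else 0%N], 1%N).
pose z : elt n := ([ffun j => if j == k then a k - lam k else a j]%N, d.-1).
have split : forall j, a j = (y.1 j + z.1 j)%N.
  move=> j; rewrite /y /z /= !ffunE; case: eqP => [->|_] //; lia.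
have sy : (\sum_(i < n) ((y.1 i)%:R / (lam i)%:R) = 1 :> rat)%R.
  rewrite (bigD1 k) //= big1 ?addr0.
    rewrite ffunE eqxx divff // pnatr_eq0 -lt0n; exact: lam0.
  by move=> i /negPf ik; rewrite ffunE ik mul0r.
exists y, z; split; last split; last split; last split.
- by rewrite /inM sy.
- move: inx; rewrite /inM /=.
  have -> : (\sum_(i < n) ((a i)%:R / (lam i)%:R) = \sum_(i < n) ((y.1 i)%:R / (lam i)%:R) + \sum_(i < n) ((z.1 i)%:R / (lam i)%:R) :> rat)%R.
    rewrite -big_split /=; apply: eq_bigr => i _; by rewrite split natrD mulrDl.
  rewrite sy.
  have -> : d = (d.-1 + 1)%N by rewrite addn1 prednK.
  by rewrite natrD addrC lerD2l addn1.  
- by case => /(_ k); rewrite ffunE eqxx => h; move: (lam0 k); rewrite h.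
- case => /(_ q); rewrite ffunE (negPf qk) => h; by move: aq; rewrite h.
- rewrite /elt_add /=; congr pair; last lia.
  apply/ffunP => j; rewrite !ffunE; case: eqP => [->|] //; by rewrite subnKC.
Qed.

Theorem lemma5p4 (n : nat) (lam : 'I_n -> nat) (x : elt n) :
  (forall i, 0 < lam i)%N ->
  minimal_generator lam x ->
  type3 x \/ type4 x ->
  forall i : 'I_n, (x.1 i < lam i)%N.
Proof.
case: x => a d lam0 mg ty k.
have [d0 [p [q [pq pos]]]] : (0 < d)%N /\ exists p q : 'I_n, p != q /\ (0 < a p)%N /\ (0 < a q)%N.
  case: ty => [[_ [d0 [i [j [ij [_ h]]]]]]|[d0 [i [j [_ [ij h]]]]]]; split => //;
  exists i, j; (split; [by rewrite neq_ltn ij | rewrite muln_gt0 in h; exact/andP]).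
case: pos => ap aq.
case: (eqVneq q k) => [qk|qk]; last exact: (@core _ _ _ _ _ _ lam0 d0 qk aq mg).
have pk : p != k by rewrite -qk.
exact: (@core _ _ _ _ _ _ lam0 d0 pk ap mg).
Qed.
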